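(* Consider a Markov decision process with stochastic policy $\pi$, transition density $T$ and initial state distribution $\alpha$. Let $0<\beta<\gamma<1$. Let $\rho_T(s,a)$ be the normalized occupancy measure generated by $(\alpha,\pi,T)$ with discount factor $\gamma$, and let $\rho_T^\beta(s,a)$ be the normalized occupancy measure generated by $(\rho_T,\pi,T)$ with discount factor $\beta$ (i.e. trajectories started from $(s_0,a_0)\sim\rho_T$ and continued under $\pi$ and $T$). Then $$D_{TV}(\rho_T\,\|\,\rho_T^\beta)\le\frac{(1-\gamma)\beta}{\gamma-\beta}.$$
   Context: The normalized occupancy measure generated by $(\mu,\pi,T)$ with discount factor $\lambda\in(0,1)$ is $\sum_{t=0}^\infty(1-\lambda)\lambda^t\,\mathbb{P}(s_t=s,a_t=a)$, where the trajectory starts from $\mu$ and evolves by $a_t\sim\pi(\cdot\mid s_t)$, $s_{t+1}\sim T(\cdot\mid s_t,a_t)$. The total variation distance is $D_{TV}(p\,\|\,q)=\frac12\int|p-q|$. *)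

(* Defs.v *)
From HB Require Import structures.
From mathcomp Require Import all_boot all_order all_algebra.
From mathcomp Require Import all_classical all_reals all_analysis.
Set Implicit Arguments.
Unset Strict Implicit.
Unset Printing Implicit Defensive.
Import Order.TTheory GRing.Theory Num.Theory.
Local Open Scope classical_set_scope.
Local Open Scope ring_scope.
Local Open Scope ereal_scope.

(* law of (s_0, a_0) when s_0 ~ alpha and a_0 ~ pi(. | s_0) *)
Definition init_sa {R : realType} {d1 d2 : measure_display}
  {S : measurableType d1} {A : measurableType d2}
  (alpha : set S -> \bar R) (pi : S -> {measure set A -> \bar R})
  : set (S * A) -> \bar R :=
  fun B => \int[alpha]_s pi s (xsection B s).

(* one step: law of (s_{t+1}, a_{t+1}) from the law m of (s_t, a_t):
   s_{t+1} ~ T(. | s_t, a_t), a_{t+1} ~ pi(. | s_{t+1}) *)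
Definition sa_step {R : realType} {d1 d2 : measure_display}
  {S : measurableType d1} {A : measurableType d2}
  (pi : S -> {measure set A -> \bar R}) (T : S * A -> {measure set S -> \bar R})
  (m : set (S * A) -> \bar R) : set (S * A) -> \bar R :=
  fun B => \int[m]_z \int[T z]_s pi s (xsection B s).

Fixpoint sa_marginal {R : realType} {d1 d2 : measure_display}
  {S : measurableType d1} {A : measurableType d2}
  (pi : S -> {measure set A -> \bar R}) (T : S * A -> {measure set S -> \bar R})
  (m0 : set (S * A) -> \bar R) (t : nat) : set (S * A) -> \bar R :=
  match t with
  | 0%N => m0
  | t'.+1 => sa_step pi T (sa_marginal pi T m0 t')
  end.

Definition occupancy {R : realType} {d1 d2 : measure_display}
  {S : measurableType d1} {A : measurableType d2}
  (pi : S -> {measure set A -> \bar R}) (T : S * A -> {measure set S -> \bar R})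
  (lambda : R) (m0 : set (S * A) -> \bar R) : set (S * A) -> \bar R :=
  fun B => \sum_(0 <= t <oo) (((1 - lambda) * lambda ^+ t)%:E
                              * sa_marginal pi T m0 t B).

(* total variation distance between (probability) measures on a measurable
   type: sup over measurable sets of |p B - q B|  (= 1/2 int |p - q|) *)
Definition TV_dist {R : realType} {d : measure_display} {X : measurableType d}
  (p q : set X -> \bar R) : \bar R :=
  ereal_sup [set `|p B - q B| | B in [set B | measurable B]].

(* Main.v *)
Require Import Defs.
From HB Require Import structures.
From mathcomp Require Import all_boot all_order all_algebra.
From mathcomp Require Import all_classical all_reals all_analysis.
From mathcomp Require Import measurable_realfun.
From mathcomp Require Import ring lra.
Import Order.TTheory GRing.Theory Num.Theory.
Import numFieldTopology.Exports.
Local Open Scope classical_set_scope.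
Local Open Scope ring_scope.
Local Open Scope ereal_scope.

Section bind.
Context {R : realType} {d d' : measure_display} {X : measurableType d}
  {Y : measurableType d'}.
Variables (m : {measure set X -> \bar R}) (F : X -> {measure set Y -> \bar R}).

Definition bindm (_ : forall U, measurable U -> measurable_fun [set: X] (F ^~ U))
  : set Y -> \bar R := fun U => \int[m]_x F x U.

Variable mF : forall U, measurable U -> measurable_fun [set: X] (F ^~ U).

Let bind0 : bindm mF set0 = 0.
Proof. by apply: integral0_eq => x _; rewrite measure0. Qed.

Let bind_ge0 U : 0 <= bindm mF U.
Proof. by apply: integral_ge0 => x _. Qed.

Let bind_sigma : semi_sigma_additive (bindm mF).
Proof.
move=> B mB tB mUB; rewrite /bindm.
rewrite (_ : (fun n => _) = fun n => \int[m]_x (\sum_(0 <= i < n) F x (B i))); last first.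
  apply/funext => n; rewrite ge0_integral_sum//.
  by move=> i; exact: mF.
rewrite [X in _ --> X](_ : _ = \int[m]_x (\sum_(0 <= i <oo) F x (B i))); last first.
  apply: eq_integral => x _; apply/esym/cvg_lim => //.
  exact: measure_semi_sigma_additive.
rewrite integral_nneseries//; last by move=> i; exact: mF.
rewrite (_ : (fun n => _) = fun n => \sum_(0 <= i < n) \int[m]_x F x (B i)); last first.
  apply/funext => n; rewrite ge0_integral_sum//.
  by move=> i; exact: mF.
apply: is_cvg_nneseries => i _ _; exact: integral_ge0.
Qed.

HB.instance Definition _ := isMeasure.Build _ _ _ (bindm mF) bind0 bind_ge0 bind_sigma.

Lemma bindm_setT : m setT = 1 -> (forall x, F x setT = 1) -> bindm mF setT = 1.
Proof.
move=> m1 F1; rewrite /bindm.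
under eq_integral => x _ do rewrite F1.
by rewrite integral_cst// mul1e.
Qed.

End bind.

Section mdp.
Context {R : realType} {d1 d2 : measure_display}
  {S : measurableType d1} {A : measurableType d2}.
Variable pi : R.-pker S ~> A.
Variable T : R.-pker (S * A)%type ~> S.

Definition lift (s : S) : set (S * A) -> \bar R := fun B => pi s (xsection B s).

Let lift0 s : lift s set0 = 0.
Proof. by rewrite /lift xsection0 measure0. Qed.
Let lift_ge0 s B : 0 <= lift s B.
Proof. exact: measure_ge0. Qed.
Let lift_sigma s : semi_sigma_additive (lift s).
Proof.
move=> F mF tF mUF; rewrite /lift xsection_bigcup.
apply: measure_semi_sigma_additive.
- by move=> n; exact: measurable_xsection.
- exact: trivIset_xsection.
- by rewrite -xsection_bigcup; exact: measurable_xsection.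
Qed.
HB.instance Definition _ s := isMeasure.Build _ _ _ (lift s) (lift0 s) (lift_ge0 s) (@lift_sigma s).

Definition liftm (s : S) : {measure set (S * A) -> \bar R} := lift s.

Lemma mlift U : measurable U -> measurable_fun [set: S] (liftm ^~ U).
Proof.
move=> mU; apply: (measurable_fun_xsection_finite_kernel pi).
by rewrite inE.
Qed.

Lemma liftT s : liftm s setT = 1.
Proof.
rewrite /= /lift.
have -> : xsection [set: S * A] s = [set: A].
  by apply/seteqP; split => y //= _; rewrite /xsection /= in_setT.
exact: prob_kernel.
Qed.

Definition stepm (z : S * A) : {measure set (S * A) -> \bar R} :=
  bindm (T z) liftm mlift.

Lemma mstep U : measurable U -> measurable_fun [set: S * A] (stepm ^~ U).
Proof.
move=> mU.
change (measurable_fun [set: S * A] (fun z => \int[T z]_s liftm s U)).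
have := @measurable_fun_integral_kernel _ _ _ _ R (fun z => T z) (measurable_kernel T) (fun s => liftm s U) (fun s => measure_ge0 _ _) (mlift _ mU).
exact.
Qed.

Lemma stepT z : stepm z setT = 1.
Proof. apply: bindm_setT; [exact: prob_kernel | exact: liftT]. Qed.

Fixpoint marg (m0 : {measure set (S * A) -> \bar R}) (n : nat)
  : {measure set (S * A) -> \bar R} :=
  match n with
  | 0%N => m0
  | n'.+1 => bindm (marg m0 n') stepm mstep
  end.

Lemma margE (m0 : {measure set (S * A) -> \bar R}) n :
  sa_marginal pi T m0 n = marg m0 n.
Proof. by elim: n => [//|n IH] /=; rewrite IH. Qed.

Lemma margT (m0 : {measure set (S * A) -> \bar R}) n : m0 setT = 1 -> marg m0 n setT = 1.
Proof.
move=> m01; elim: n => [//|n IH] /=.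
apply: bindm_setT => //; exact: stepT.
Qed.

Definition occm (m0 : {measure set (S * A) -> \bar R}) (c : nat -> {nonneg R})
  : {measure set (S * A) -> \bar R} :=
  mseries (fun t => mscale (c t) (marg m0 t)) 0.

Lemma marg_occm (m0 : {measure set (S * A) -> \bar R}) (c : nat -> {nonneg R}) k B : measurable B ->
  marg (occm m0 c) k B = \sum_(0 <= t <oo) ((c t)%:num)%:E * marg m0 (t + k) B.
Proof.
elim: k B => [|k IH] B mB.
  by apply: eq_eseriesr => t _; rewrite addn0.
transitivity (\int[marg (occm m0 c) k]_z stepm z B); first by [].
rewrite (eq_measure_integral (mseries (fun t => mscale (c t) (marg m0 (t + k))) 0)); last first.
  by move=> U mU _; rewrite IH.
rewrite ge0_integral_measure_series//; last exact: mstep.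
apply: eq_eseriesr => t _; rewrite ge0_integral_mscale//; last exact: mstep.
by rewrite addnS.
Qed.

End mdp.

Section series.
Context {R : realType}.

Definition cw (l : R) (t : nat) : R := ((1 - l) * l ^+ t)%R.

Lemma cw_ge0 l t : (0 <= l)%R -> (l <= 1)%R -> (0 <= cw l t)%R.
Proof. by move=> l0 l1; rewrite /cw mulr_ge0 ?subr_ge0 ?exprn_ge0. Qed.

Lemma geo_lim (l : R) : (0 <= l)%R -> (l < 1)%R -> limn (series (geometric (1 - l) l)) = 1%R.
Proof.
move=> l0 l1.
have H : (`|l| < 1)%R by rewrite ger0_norm.
have := @cvg_geometric_series R (1 - l)%R l H.
move=> /(cvg_lim (@Rhausdorff R)) ->.
by rewrite divff// subr_eq0 gt_eqF.
Qed.

Lemma geo (l : R) : (0 <= l)%R -> (l < 1)%R -> \sum_(0 <= t <oo) (cw l t)%:E = 1.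
Proof.
move=> l0 l1.
have -> : (fun n => \sum_(0 <= t < n) (cw l t)%:E) = EFin \o series (geometric (1 - l) l).
  by apply/funext => n; rewrite /series /= sumEFin.
rewrite EFin_lim; last by apply: is_cvg_geometric_series; rewrite ger0_norm.
by rewrite geo_lim.
Qed.

Lemma sum_cw_le1 (l : R) (u : nat -> R) : (0 <= l)%R -> (l < 1)%R ->
  (forall t, 0 <= u t <= 1)%R ->
  0 <= \sum_(0 <= t <oo) (cw l t * u t)%:E <= 1.
Proof.
move=> l0 l1 u01.
have cwl t : (0 <= cw l t)%R by apply: cw_ge0 => //; exact: ltW.
apply/andP; split.
  apply: nneseries_ge0 => t _ _; rewrite lee_fin mulr_ge0//.
  by case/andP: (u01 t).
rewrite -(geo l l0 l1); apply: lee_nneseries => [t _ _|t _].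
  rewrite lee_fin mulr_ge0//.
  by case/andP: (u01 t).
rewrite lee_fin -[leRHS]mulr1 ler_wpM2l//.
by case/andP: (u01 t).
Qed.

Lemma fin01 (x : \bar R) : 0 <= x <= 1 -> x = (fine x)%:E /\ (0 <= fine x <= 1)%R.
Proof.
move=> /andP[x0 x1].
have xf : x \is a fin_num by rewrite ge0_fin_numE// (le_lt_trans x1)// ltry.
split; first by rewrite fineK.
by rewrite -lee_fin -[X in (_ <= X)%R]/(fine 1) -lee_fin !fineK// x0 x1.
Qed.

Lemma key (a : nat -> R) (b g : R) : (forall t, 0 <= a t <= 1)%R ->
  (0 < b)%R -> (b < g)%R -> (g < 1)%R ->
  `| \sum_(0 <= t <oo) (cw g t * a t)%:E
     - \sum_(0 <= k <oo) (cw b k)%:E * \sum_(0 <= t <oo) (cw g t * a (t + k)%N)%:E |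
  <= (((1 - g) * b) / (g - b))%:E.
Proof.
move=> a01 b0 bg g1.
have g0 : (0 <= g)%R by rewrite ltW// (lt_trans b0).
have b1 : (b < 1)%R by rewrite (lt_trans bg).
have b0' : (0 <= b)%R by rewrite ltW.
have cwg t : (0 <= cw g t)%R by apply: cw_ge0 => //; exact: ltW.
have cwb t : (0 <= cw b t)%R by apply: cw_ge0 => //; exact: ltW.
pose p k := fine (\sum_(0 <= t <oo) (cw g t * a (t + k)%N)%:E).
have Pb k : 0 <= \sum_(0 <= t <oo) (cw g t * a (t + k)%N)%:E <= 1.
  apply: sum_cw_le1 => // t; exact: a01.
have PE k : \sum_(0 <= t <oo) (cw g t * a (t + k)%N)%:E = (p k)%:E.
  by have [] := fin01 _ (Pb k).
have p01 k : (0 <= p k <= 1)%R by have [] := fin01 _ (Pb k).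
have rec k : p k = ((1 - g) * a k + g * p k.+1)%R.
  apply: EFin_inj; rewrite -PE nneseries_recl//; last first.
    by move=> t _; rewrite lee_fin mulr_ge0//; case/andP: (a01 (t + k)%N).
  rewrite -(nneseries_addn (f := fun t => (cw g t * a (t + k)%N)%:E) 1%N); last first.
    by move=> t; rewrite lee_fin mulr_ge0//; case/andP: (a01 (t + k)%N).
  rewrite (eq_eseriesr (g := fun t => g%:E * (cw g t * a (t + k.+1)%N)%:E)); last first.
    move=> t _; rewrite -EFinM addn1 addSnnS /cw exprS; congr EFin; ring.
  rewrite nneseriesZl; last first.
    by move=> t _; rewrite lee_fin mulr_ge0//; case/andP: (a01 (t + k.+1)%N).
  rewrite PE /cw expr0 mulr1 add0n.
  by rewrite EFinD EFinM.
have P0E : \sum_(0 <= t <oo) (cw g t * a t)%:E = (p 0%N)%:E.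
  by rewrite -PE; apply: eq_eseriesr => t _; rewrite addn0.
have QE : \sum_(0 <= k <oo) (cw b k)%:E * \sum_(0 <= t <oo) (cw g t * a (t + k)%N)%:E
    = \sum_(0 <= k <oo) (cw b k * p k)%:E.
  by apply: eq_eseriesr => k _; rewrite PE EFinM.
have [aa [AE A01]] : exists aa, \sum_(0 <= k <oo) (cw b k * a k)%:E = aa%:E /\ (0 <= aa <= 1)%R.
  have := fin01 _ (sum_cw_le1 b a b0' b1 a01); case=> h1 h2.
  by exists (fine (\sum_(0 <= k <oo) (cw b k * a k)%:E)).
have [w [WE W01]] : exists w, \sum_(0 <= k <oo) (cw b k * p k.+1)%:E = w%:E /\ (0 <= w <= 1)%R.
  have := fin01 _ (@sum_cw_le1 b (fun k => p k.+1) b0' b1 (fun k => p01 k.+1)); case=> h1 h2.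
  by exists (fine (\sum_(0 <= k <oo) (cw b k * p k.+1)%:E)).
have Q1 : \sum_(0 <= k <oo) (cw b k * p k)%:E = ((1 - g) * aa + g * w)%:E.
  rewrite (eq_eseriesr (g := fun k => ((1 - g)%:E * (cw b k * a k)%:E) + (g%:E * (cw b k * p k.+1)%:E))); last first.
    by move=> k _; rewrite -!EFinM -EFinD (rec k); congr EFin; ring.
  rewrite nneseriesD; last 2 first.
  - move=> k _ _; rewrite -EFinM lee_fin mulr_ge0 ?subr_ge0 ?(ltW g1)// mulr_ge0//.
    by case/andP: (a01 k).
  - move=> k _ _; rewrite -EFinM lee_fin mulr_ge0// mulr_ge0//.
    by case/andP: (p01 k.+1).
  rewrite !nneseriesZl; last 2 first.
  - by move=> k _; rewrite lee_fin mulr_ge0//; case/andP: (p01 k.+1).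
  - by move=> k _; rewrite lee_fin mulr_ge0//; case/andP: (a01 k).
  by rewrite AE WE -!EFinM -EFinD.
have Q2 : \sum_(0 <= k <oo) (cw b k * p k)%:E = ((1 - b) * p 0%N + b * w)%:E.
  rewrite nneseries_recl//; last first.
    by move=> k _; rewrite lee_fin mulr_ge0//; case/andP: (p01 k).
  rewrite -(nneseries_addn (f := fun k => (cw b k * p k)%:E) 1%N); last first.
    by move=> k; rewrite lee_fin mulr_ge0//; case/andP: (p01 k).
  rewrite (eq_eseriesr (g := fun k => b%:E * (cw b k * p k.+1)%:E)); last first.
    move=> k _; rewrite -EFinM addn1 /cw exprS; congr EFin; ring.
  rewrite nneseriesZl; last first.
    by move=> k _; rewrite lee_fin mulr_ge0//; case/andP: (p01 k.+1).
  by rewrite WE /cw expr0 mulr1 -EFinM -EFinD.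
have E : ((1 - g) * aa + g * w = (1 - b) * p 0%N + b * w)%R.
  by apply: EFin_inj; rewrite -Q1 -Q2.
rewrite P0E QE Q1 -EFinB abse_EFin lee_fin.
have gb : (0 < g - b)%R by rewrite subr_gt0.
have E2 : (g * ((1 - g) * aa + g * w) = g * ((1 - b) * p 0%N + b * w))%R by rewrite E.
have key : ((p 0%N - ((1 - g) * aa + g * w)) * (g - b) = - (b * (1 - g) * (p 0%N - aa)))%R.
  nra.
have h1 : (`|p 0%N - aa| <= 1)%R.
  case/andP: (p01 0%N) => ? ?; case/andP: A01 => ? ?.
  rewrite ler_norml; apply/andP; split; lra.
rewrite ler_pdivlMr// -[X in (_ * X <= _)%R](gtr0_norm gb) -normrM key normrN normrM.
rewrite (ger0_norm (_ : 0 <= b * (1 - g))%R); last by rewrite mulr_ge0// subr_ge0 ltW.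
have bg0 : (0 <= b * (1 - g))%R by rewrite mulr_ge0// subr_ge0 ltW.
nra.
Qed.
End series.

Theorem lemma2 (R : realType) (d1 d2 : measure_display)
  (S : measurableType d1) (A : measurableType d2)
  (alpha : probability S R) (pi : R.-pker S ~> A)
  (T : R.-pker (S * A)%type ~> S) (beta gamma : R) :
  (0 < beta)%R -> (beta < gamma)%R -> (gamma < 1)%R ->
  let rhoT := occupancy pi T gamma (init_sa alpha pi) in
  let rhoTbeta := occupancy pi T beta rhoT in
  TV_dist rhoT rhoTbeta <= (((1 - gamma) * beta) / (gamma - beta))%:E.
Proof.
move=> b0 bg g1; cbv zeta.
set rhoT := occupancy pi T gamma (init_sa alpha pi).
set rhoTbeta := occupancy pi T beta rhoT.
have g0 : (0 <= gamma)%R by rewrite ltW// (lt_trans b0).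
pose cg t : {nonneg R} := NngNum (cw_ge0 gamma t g0 (ltW g1)).
pose init := bindm alpha (liftm pi) (mlift pi).
have initE : init_sa alpha pi = init :> (set _ -> \bar R) by [].
have init1 : init setT = 1.
  by apply: bindm_setT; [exact: probability_setT | exact: liftT].
pose M := occm pi T init cg.
have rhoTE : rhoT = M :> (set _ -> \bar R).
  apply/funext => B; rewrite /rhoT /occupancy initE.
  apply: eq_eseriesr => t _; rewrite margE.
  by [].
rewrite /TV_dist; apply: ge_ereal_sup => _ [B mB <-].
have a01 t : 0 <= marg pi T init t B <= 1.
  rewrite measure_ge0 /= -(margT pi T init t init1).
  by apply: le_measure; rewrite ?inE.
pose a t := fine (marg pi T init t B).
have aE t : marg pi T init t B = (a t)%:E by have [] := fin01 _ (a01 t).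
have a01' t : (0 <= a t <= 1)%R by have [] := fin01 _ (a01 t).
have -> : rhoT B = \sum_(0 <= t <oo) (cw gamma t * a t)%:E.
  rewrite rhoTE; apply: eq_eseriesr => t _.
  transitivity ((cg t)%:num%:E * marg pi T init t B); first by [].
  by rewrite aE EFinM.
have -> : rhoTbeta B = \sum_(0 <= k <oo) (cw beta k)%:E *
    \sum_(0 <= t <oo) (cw gamma t * a (t + k)%N)%:E.
  rewrite /rhoTbeta /occupancy rhoTE; apply: eq_eseriesr => k _.
  rewrite margE marg_occm//; congr (_ * _).
  by apply: eq_eseriesr => t _; rewrite aE EFinM.
exact: key.
Qed.
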